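(* Let $n\ge1$, let $\Lambda$ be a completely positive trace-preserving (CPTP) map on operators on $\mathcal{H}=(\mathbb{C}^3)^{\otimes n}$, and suppose every Pauli $P\in\mathbb{P}_n$ is implemented noisily as $\hat{\mathcal{P}}=\mathcal{P}\circ\Lambda$ (gate-independent noise). Let $\hat\rho_0$ be a (noisy) initial state and $\hat\Pi_c$ a (noisy) Hermitian measurement effect on $\mathcal{H}$, and for $m\ge1$ define the LRB average $$p_{\Pi_c}(m)=\frac{1}{|\mathbb{P}_n|^m}\sum_{P_1,\dots,P_m\in\mathbb{P}_n}\operatorname{tr}\big(\hat\Pi_c\,\hat{\mathcal{P}}_m\circ\cdots\circ\hat{\mathcal{P}}_1(\hat\rho_0)\big).$$ Let $Q=Q_\Lambda$ be the $2^n\times 2^n$ matrix indexed by $\{c,l\}^n$ with entries $Q_{\bm i,\bm j}=\operatorname{tr}(\Pi_{\bm i}\Lambda(\widetilde{\Pi}_{\bm j}))$. Then there is a state $\tilde\rho_0$ on $\mathcal{H}$ determined by $\hat\rho_0$ (and $\Lambda$) such that for every $m\ge1$ $$p_{\Pi_c}(m)=\sum_{\bm i,\bm j\in\{c,l\}^n}\operatorname{tr}(\widetilde{\Pi}_{\bm i}\hat\Pi_c)\,(Q^{m-1})_{\bm i,\bm j}\,\operatorname{tr}(\Pi_{\bm j}\tilde\rho_0).$$ Moreover the average leakage rate of $\Lambda$ equals $L_{\mathrm{ave}}(\Lambda)=1-Q_{c^n,c^n}$ and the average seepage rate equals $S_{\mathrm{ave}}(\Lambda)=\frac{1}{3^n-2^n}\sum_{\bm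 i\ne c^n}\dim(\mathcal{H}_{\bm i})\,Q_{c^n,\bm i}$, where $c^n=(c,\dots,c)$.
   Context: A single qubit with leakage is $\mathbb{C}^3$ with basis $\{|0\rangle,|1\rangle,|2\rangle\}$; single-qubit projectors $\Pi_c=|0\rangle\langle0|+|1\rangle\langle1|$ (computational) and $\Pi_l=|2\rangle\langle2|$ (leakage). For $\bm i\in\{c,l\}^n$, $\Pi_{\bm i}=\bigotimes_k\Pi_{i_k}$ with range $\mathcal{H}_{\bm i}$ and $\widetilde{\Pi}_{\bm i}=\Pi_{\bm i}/\dim(\mathcal{H}_{\bm i})$. The $n$-qubit computational projector is $\Pi_c:=\Pi_{c^n}$ (rank $2^n$), the leakage projector is $\Pi_l:=\mathbb{I}-\Pi_c$ (rank $3^n-2^n$), and $\widetilde{\Pi}_c=\Pi_c/2^n$, $\widetilde{\Pi}_l=\Pi_l/(3^n-2^n)$. The average leakage and seepage rates of a channel $\Lambda$ are $L_{\mathrm{ave}}(\Lambda)=\operatorname{tr}(\Pi_l\Lambda(\widetilde{\Pi}_c))$ and $S_{\mathrm{ave}}(\Lambda)=\operatorname{tr}(\Pi_c\Lambda(\widetilde{\Pi}_l))$. Pauli group: $\mathbb{P}=\{\pm1,\pm\mathrm{i}\}\times\{I,X,Y,Z\}$, $\mathbb{P}_n=\mathbb{P}^{\times n}$; for $U\in\mathbb{P}$ the qutrit channel is $\rho\mapsto(U\oplus1)\rho(U\oplus1)^\dagger$ ($U$ on $\operatorname{span}\{|0\rangle,|1\rangle\}$, identity on $|2\rangle$), and for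 $P=(P_1,\dots,P_n)$ the ideal channel $\mathcal{P}$ is the tensor product of these. *)

(* Defs.v *)
(* Scalars: an arbitrary numClosedFieldType C
   (e.g. the complex numbers); the statement is purely algebraic. *)
From HB Require Import structures.
From mathcomp Require Import all_boot all_order all_algebra.
Set Implicit Arguments. Unset Strict Implicit. Unset Printing Implicit Defensive.
Import Order.TTheory GRing.Theory Num.Theory.
Local Open Scope ring_scope.

Section Defs.
Variable C : numClosedFieldType.

Definition adj (p q : nat) (A : 'M[C]_(p, q)) : 'M[C]_(q, p) :=
  (map_mx (fun z => z^*) A)^T.

Definition is_hermitian (d : nat) (A : 'M[C]_d) : Prop := adj A = A.

Definition psd (d : nat) (A : 'M[C]_d) : Prop :=
  forall v : 'cV[C]_d, 0 <= (adj v *m A *m v) 0 0.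

Definition is_state (d : nat) (rho : 'M[C]_d) : Prop :=
  psd rho /\ \tr rho = 1.

(* An operator on C^k (x) C^d given by its k x k family of d x d blocks
   X a b = (<a| (x) I) X (|b> (x) I) is psd. *)
Definition block_psd (d k : nat) (X : 'I_k -> 'I_k -> 'M[C]_d) : Prop :=
  forall v : 'I_k -> 'cV[C]_d,
    0 <= \sum_(a < k) \sum_(b < k) (adj (v a) *m X a b *m v b) 0 0.

(* Lam (x) id_k is positive for every k (Lam (x) id_k acts blockwise). *)
Definition completely_positive (d : nat) (Lam : 'M[C]_d -> 'M[C]_d) : Prop :=
  forall (k : nat) (X : 'I_k -> 'I_k -> 'M[C]_d),
    block_psd X -> block_psd (fun a b => Lam (X a b)).

Definition trace_preserving (d : nat) (Lam : 'M[C]_d -> 'M[C]_d) : Prop :=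
  forall X, \tr (Lam X) = \tr X.

(* computational basis of (C^3)^{(x) n}: strings of qutrit levels *)
Definition St (n : nat) := {ffun 'I_n -> 'I_3}.
Definition Dim (n : nat) := #|St n|.
Definition Op (n : nat) := 'M[C]_(Dim n).
Definition lev (n : nat) (x : 'I_(Dim n)) (k : 'I_n) : 'I_3 :=
  (@enum_val (St n) (mem {: St n}) x) k.

(* labels {c,l}^n : false = c (computational), true = l (leaked) *)
Definition Lab (n : nat) := {ffun 'I_n -> bool}.
Definition cn (n : nat) : Lab n := [ffun _ => false].

(* Pi_i = (x)_k Pi_{i_k}, Pi_c = |0><0|+|1><1|, Pi_l = |2><2| *)
Definition Pi (n : nat) (i : Lab n) : Op n :=
  \matrix_(x, y) ((x == y) &&
     [forall k : 'I_n, (nat_of_ord (lev x k) == 2%N) == i k])%:R.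

(* dim H_i = rank of Pi_i *)
Definition dimH (n : nat) (i : Lab n) : nat := \rank (Pi i).

Definition tPi (n : nat) (i : Lab n) : Op n := ((dimH i)%:R)^-1 *: Pi i.

Definition Pic (n : nat) : Op n := Pi (cn n).
Definition Pil (n : nat) : Op n := 1%:M - Pic n.
Definition tPic (n : nat) : Op n := ((2 ^ n)%:R)^-1 *: Pic n.
Definition tPil (n : nat) : Op n := ((3 ^ n - 2 ^ n)%:R)^-1 *: Pil n.

Definition L_ave (n : nat) (Lam : Op n -> Op n) : C := \tr (Pil n *m Lam (tPic n)).
Definition S_ave (n : nat) (Lam : Op n -> Op n) : C := \tr (Pic n *m Lam (tPil n)).

(* single-qubit Pauli: (phase in {1,-1,i,-i}) x (I,X,Y,Z) *)
Definition Pauli1 := ('I_4 * 'I_4)%type.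

Definition phase (a : 'I_4) : C :=
  match nat_of_ord a with 0 => 1 | 1 => -1 | 2 => 'i | _ => - 'i end.

Definition pauli2 (p : 'I_4) (a b : nat) : C :=
  match nat_of_ord p, a, b with
  | 0, 0, 0 => 1 | 0, 1, 1 => 1
  | 1, 0, 1 => 1 | 1, 1, 0 => 1
  | 2, 0, 1 => - 'i | 2, 1, 0 => 'i
  | 3, 0, 0 => 1 | 3, 1, 1 => -1
  | _, _, _ => 0
  end.

(* the qutrit matrix U (+) 1 *)
Definition qutrit_pauli (P : Pauli1) : 'M[C]_3 :=
  \matrix_(a, b)
    if (a < 2)%N && (b < 2)%N then phase P.1 * pauli2 P.2 a b
    else ((a == 2%N :> nat) && (b == 2%N :> nat))%:R.

Definition PauliN (n : nat) := {ffun 'I_n -> Pauli1}.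

(* tensor product of the qutrit matrices *)
Definition pauli_mx (n : nat) (P : PauliN n) : Op n :=
  \matrix_(x, y) \prod_(k < n) qutrit_pauli (P k) (lev x k) (lev y k).

Definition pauli_chan (n : nat) (P : PauliN n) (X : Op n) : Op n :=
  pauli_mx P *m X *m adj (pauli_mx P).

(* noisy sequence  hatP_m o ... o hatP_1 , hatP = P o Lam,
   applied to rho; s = [P_1; ...; P_m] *)
Definition noisy_seq (n : nat) (Lam : Op n -> Op n) (s : seq (PauliN n))
  (rho : Op n) : Op n :=
  foldl (fun r P => pauli_chan P (Lam r)) rho s.

Definition p_LRB (n : nat) (Lam : Op n -> Op n) (Pihat rho0 : Op n) (m : nat) : C :=
  ((#|PauliN n| ^ m)%:R)^-1 *
  \sum_(s : m.-tuple (PauliN n)) \tr (Pihat *m noisy_seq Lam s rho0).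

Definition Qent (n : nat) (Lam : Op n -> Op n) (i j : Lab n) : C :=
  \tr (Pi i *m Lam (tPi j)).

Definition Qmx (n : nat) (Lam : Op n -> Op n) : 'M[C]_#|Lab n| :=
  \matrix_(a, b) Qent Lam (enum_val a) (enum_val b).

Definition Qpow (n : nat) (Lam : Op n -> Op n) (k : nat) (i j : Lab n) : C :=
  (iter k (mulmx (Qmx Lam)) 1%:M) (enum_rank i) (enum_rank j).

End Defs.

(* Main.v *)
Require Import Defs.
From HB Require Import structures.
From mathcomp Require Import all_boot all_order all_algebra.
Import Order.TTheory GRing.Theory Num.Theory.
Local Open Scope ring_scope.
Set Implicit Arguments. Unset Strict Implicit. Unset Printing Implicit Defensive.

Lemma rank_diag (F : fieldType) (N : nat) (d : 'rV[F]_N) :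
  \rank (diag_mx d) = (\sum_(x < N) (d ord0 x != 0%R))%N.
Proof.
elim: N d => [|N IH] d; first by rewrite big_ord0 flatmx0 mxrank0.
rewrite big_ord_recl.
pose l : 'rV_1 := lsubmx (d : 'rV_(1 + N)).
pose r : 'rV_N := rsubmx (d : 'rV_(1 + N)).
have H := diag_mx_row l r.
rewrite hsubmxK in H.
rewrite H.
rewrite [LHS](rank_diag_block_mx (diag_mx l) (diag_mx r)) IH.
congr (_ + _)%N.
  rewrite [diag_mx l]mx11_scalar.
  have -> : diag_mx l ord0 ord0 = d ord0 ord0.
    by rewrite mxE eqxx mulr1n mxE; congr (d _ _); apply/val_inj.
  case: eqP => [->|/eqP nz]; first by rewrite raddf0 mxrank0.
  by rewrite mxrank_unit // unitmxE det_scalar1 unitfE.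
apply: eq_bigr => i _; rewrite mxE; congr (d _ _ != 0); exact/val_inj.
Qed.

Section S.
Variable C : numClosedFieldType.
Variable n : nat.

Lemma prod_bool (I : finType) (P : I -> bool) :
  \prod_i ((P i)%:R : C) = ([forall i, P i])%:R.
Proof.
case: (boolP [forall i, P i]) => [/forallP H | /forallPn [i Hi]].
  by rewrite big1 // => i _; rewrite H.
by rewrite (bigD1 i) //= (negbTE Hi) mul0r.
Qed.

Definition pat (x : 'I_(Dim n)) : Lab n := [ffun k => nat_of_ord (lev x k) == 2%N].

Lemma PiE i x y : Pi C i x y = ((x == y) && (pat x == i))%:R.
Proof.
rewrite mxE; congr ((_ && _)%:R).
apply/forallP/eqP => [H|<- k]; last by rewrite ffunE.
by apply/ffunP => k; rewrite ffunE; move: (H k) => /eqP.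
Qed.

Lemma Pi_diag i : Pi C i = diag_mx (\row_x ((pat x == i)%:R)).
Proof.
apply/matrixP => x y; rewrite PiE !mxE.
by case: eqP => [->|]; rewrite ?andbT ?mulr1n ?mulr0n // andFb.
Qed.

Lemma dimHE i : (dimH C i)%:R = \sum_x ((pat x == i)%:R : C).
Proof.
rewrite /dimH Pi_diag rank_diag natr_sum; apply: eq_bigr => x _.
by rewrite mxE; case: (pat x == i); rewrite ?oner_eq0 ?eqxx.
Qed.

Lemma sum_lev (F : St n -> C) :
  \sum_(x : 'I_(Dim n)) F (@enum_val (St n) (mem {: St n}) x) = \sum_(f : St n) F f.
Proof.
rewrite (reindex (@enum_rank (St n))) /=; last first.
  by exists (@enum_val (St n) (mem {: St n})) => x _; rewrite ?enum_valK ?enum_rankK.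
by apply: eq_bigr => f _; rewrite enum_rankK.
Qed.

Lemma dimH_prod i : (dimH C i)%:R = \prod_(k < n) (if i k then 1 else 2 : C).
Proof.
rewrite dimHE.
rewrite (eq_bigr (fun x => \prod_(k < n)
   (((nat_of_ord ((@enum_val (St n) (mem {: St n}) x) k) == 2%N) == i k)%:R : C))); last first.
  move=> x _; rewrite prod_bool; congr (_%:R).
congr nat_of_bool.   apply/idP/idP => [/eqP <-|/forallP H]; first by apply/forallP => k; rewrite ffunE.
  by apply/eqP/ffunP => k; rewrite ffunE; move: (H k) => /eqP.
rewrite (sum_lev (fun f => \prod_(k < n) (((nat_of_ord (f k) == 2%N) == i k)%:R : C))).
rewrite -(bigA_distr_bigA (fun k (a : 'I_3) => (((nat_of_ord a == 2%N) == i k)%:R : C))).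
apply: eq_bigr => k _.
by rewrite !big_ord_recl big_ord0; case: (i k) => /=; rewrite ?addr0 ?add0r.
Qed.

End S.

Section S.
Variable C : numClosedFieldType.

Lemma Cii : 'i * 'i = -1 :> C.
Proof. by rewrite -expr2 sqrCi. Qed.

Lemma sum_phase : \sum_(a < 4) phase C a = 0.
Proof. by rewrite !big_ord_recl big_ord0 /phase /=; rewrite addrA addrN add0r addr0 addrN. Qed.

Lemma phase_norm a : phase C a * (phase C a)^* = 1.
Proof.
case: a => [[|[|[|[|?]]]] Ha] //; rewrite /phase /= ?rmorph1 ?rmorphN ?conjCi ?rmorph1 ?mulr1 ?mulrNN ?mulr1 //.
rewrite ?mulrN ?Cii ?opprK //.
rewrite /= conjCi mulrN Cii opprK //.
Qed.

Lemma pauli_sum (b c d e : 'I_3) : (b < 2)%N -> (c < 2)%N -> (d < 2)%N -> (e < 2)%N ->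
  \sum_(s < 4) pauli2 C s b c * (pauli2 C s d e)^* =
  (if (b == d) && (c == e) then 2 else 0)%N%:R.
Proof.
case: b => [[|[|?]] ?] //; case: c => [[|[|?]] ?] //; case: d => [[|[|?]] ?] //;
case: e => [[|[|?]] ?] // _ _ _ _;
rewrite !big_ord_recl big_ord0 /pauli2 /= ?rmorph1 ?rmorph0 ?rmorphN ?conjCi ?rmorph1
  ?mulr0 ?mul0r ?mulr1 ?mulrNN ?mulrN ?mulNr ?opprK ?Cii ?opprK ?addr0 ?add0r //.
all: rewrite /= ?conjCi ?mulrN ?Cii ?opprK ?mulr1 ?addrN //.
Qed.

Definition wn (b c d e : 'I_3) : nat :=
  if (b == d) && (c == e) && ((nat_of_ord b == 2%N) == (nat_of_ord c == 2%N))
  then (if nat_of_ord b == 2%N then 16 else 8)%N else 0%N.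

Lemma site (b c d e : 'I_3) :
  \sum_(p : Pauli1) qutrit_pauli C p b c * (qutrit_pauli C p d e)^* = (wn b c d e)%:R.
Proof.
rewrite (_ : \sum_(p : Pauli1) _ = \sum_(a < 4) \sum_(s < 4)
   qutrit_pauli C (a, s) b c * (qutrit_pauli C (a, s) d e)^*); last first.
  by rewrite pair_bigA; apply: eq_bigr => -[].
under eq_bigr => a _ do under eq_bigr => s _ do rewrite !mxE /=.
case: (boolP ((b < 2)%N && (c < 2)%N)) => Hbc; case: (boolP ((d < 2)%N && (e < 2)%N)) => Hde.
- under eq_bigr => a _ do under eq_bigr => s _ do rewrite rmorphM mulrACA phase_norm mul1r.
  rewrite sumr_const card_ord.
  case/andP: Hbc => Hb Hc; case/andP: Hde => Hd He.
  rewrite pauli_sum //.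
  move: Hb Hc Hd He; case: b => [[|[|[|?]]] ?] //; case: c => [[|[|[|?]]] ?] //;
    case: d => [[|[|[|?]]] ?] //; case: e => [[|[|[|?]]] ?] // _ _ _ _;
    rewrite /wn /= ?mul0rn -?mulrnA //.
- under eq_bigr => a _ do under eq_bigr => s _ do rewrite -mulrA.
  rewrite exchange_big /= big1 ?wn; last by move=> s _; rewrite -mulr_suml sum_phase mul0r.
  move: Hbc Hde; case: b => [[|[|[|?]]] ?] //; case: c => [[|[|[|?]]] ?] //;
    case: d => [[|[|[|?]]] ?] //; case: e => [[|[|[|?]]] ?] // _ _;
    by rewrite /wn.
- under eq_bigr => a _ do under eq_bigr => s _ do rewrite rmorphM mulrCA.
  rewrite exchange_big /= big1 ?wn; last by move=> s _; rewrite -mulr_suml -rmorph_sum sum_phase rmorph0 mul0r.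
  move: Hbc Hde; case: b => [[|[|[|?]]] ?] //; case: c => [[|[|[|?]]] ?] //;
    case: d => [[|[|[|?]]] ?] //; case: e => [[|[|[|?]]] ?] // _ _;
    by rewrite /wn.
- rewrite sumr_const card_ord sumr_const card_ord.
  move: Hbc Hde; case: b => [[|[|[|?]]] ?] //; case: c => [[|[|[|?]]] ?] //;
    case: d => [[|[|[|?]]] ?] //; case: e => [[|[|[|?]]] ?] // _ _;
    rewrite /wn /= ?rmorph0 ?rmorph1 ?mulr0 ?mulr1 ?mul0rn -?mulrnA //.
Qed.
End S.

Section S.
Variable C : numClosedFieldType.
Variable n : nat.

Lemma wn_div (b c d e : 'I_3) : (wn b c d e)%:R / 16 =
  ((b == d) && (c == e) && ((nat_of_ord b == 2%N) == (nat_of_ord c == 2%N)))%:R *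
  (if nat_of_ord b == 2%N then 1 else 2^-1) :> C.
Proof.
have h16 : (16%:R : C) != 0 by rewrite pnatr_eq0.
rewrite /wn; case: ifP => _; last by rewrite !mul0r.
rewrite mul1r; case: ifP => _; first by rewrite divff.
rewrite (_ : 16%:R = 8%:R * 2%:R :> C); last by rewrite -natrM.
by rewrite invfM mulrA divff ?mul1r // pnatr_eq0.
Qed.

Lemma lev_eq (x y : 'I_(Dim n)) : [forall k, lev x k == lev y k] = (x == y).
Proof.
rewrite /lev -(inj_eq (@enum_val_inj _ (mem {: St n}))).
apply/forallP/eqP => [H|-> //]; by apply/ffunP => k; move: (H k) => /eqP.
Qed.

Lemma pat_eq (x u : 'I_(Dim n)) :
  [forall k, (nat_of_ord (lev x k) == 2%N) == (nat_of_ord (lev u k) == 2%N)] = (pat x == pat u).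
Proof.
apply/forallP/eqP => [H|H k]; first by apply/ffunP => k; rewrite !ffunE; move: (H k) => /eqP.
by move/ffunP: H => /(_ k); rewrite !ffunE => ->.
Qed.

Definition cfac (x : 'I_(Dim n)) : C := \prod_(k < n) (if pat x k then 1 else 2^-1).

Lemma dimH_inv (j : Lab n) (x : 'I_(Dim n)) : pat x = j -> ((dimH C j)%:R)^-1 = cfac x.
Proof.
move=> <-; rewrite dimH_prod -prodfV /cfac; apply: eq_bigr => k _.
by case: (pat x k); rewrite ?invr1.
Qed.

Definition Tw (X : Op C n) : Op C n :=
  ((#|PauliN n|)%:R)^-1 *: \sum_(P : PauliN n) pauli_chan P X.

Lemma trPi (j : Lab n) (X : Op C n) :
  \tr (Pi C j *m X) = \sum_u ((pat u == j)%:R * X u u).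
Proof.
rewrite /mxtrace; apply: eq_bigr => u _; rewrite mxE (bigD1 u) //= big1 ?addr0.
  by rewrite PiE eqxx.
by move=> w /negPf Hw; rewrite PiE eq_sym Hw mul0r.
Qed.

Lemma chanE (P : PauliN n) (X : Op C n) x y : pauli_chan P X x y =
  \sum_u \sum_v X u v * (pauli_mx C P x u * (pauli_mx C P y v)^*).
Proof.
rewrite /pauli_chan /adj mxE exchange_big /=; apply: eq_bigr => v _.
rewrite !mxE big_distrl /=; apply: eq_bigr => u _.
by rewrite -mulrA mulrCA.
Qed.

Lemma cardPN : #|PauliN n| = (16 ^ n)%N.
Proof. by rewrite card_ffun card_prod !card_ord. Qed.

Lemma avgE x u y v : ((#|PauliN n|)%:R)^-1 *
   \sum_(P : PauliN n) (pauli_mx C P x u * (pauli_mx C P y v)^*) =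
   ((x == y) && (u == v) && (pat x == pat u))%:R * cfac x.
Proof.
under eq_bigr => P _ do rewrite !mxE rmorph_prod -big_split /=.
rewrite -(bigA_distr_bigA (fun k (p : Pauli1) => qutrit_pauli C p (lev x k) (lev u k) *
   (qutrit_pauli C p (lev y k) (lev v k))^*)) /=.
under eq_bigr => k _ do rewrite site.
rewrite cardPN natrX (_ : 16%:R ^+ n = \prod_(k < n) (16%:R : C)); last by rewrite prodr_const card_ord.
rewrite -prodfV -big_split /=.
under eq_bigr => k _ do rewrite mulrC wn_div.
rewrite big_split /= prod_bool.
congr (_ * _); last by rewrite /cfac; apply: eq_bigr => k _; rewrite ffunE.
congr (_%:R); congr nat_of_bool; rewrite -lev_eq -lev_eq -pat_eq.
apply/idP/idP => [/forallP H|/andP [/andP [/forallP H1 /forallP H2] /forallP H3]].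
  by apply/andP; split; [apply/andP; split|]; apply/forallP => k; case/andP: (H k) => /andP [].
by apply/forallP => k; rewrite H1 H2 H3.
Qed.

Lemma twirl (X : Op C n) : Tw X = \sum_(i : Lab n) \tr (Pi C i *m X) *: tPi C i.
Proof.
apply/matrixP => x y.
rewrite summxE (bigD1 (pat x)) //= big1 ?addr0; last first.
  by move=> i Hi; rewrite mxE /tPi mxE PiE (eq_sym (pat x) i) (negPf Hi) andbF mulr0 mulr0.
rewrite [in RHS]mxE /tPi [in RHS]mxE PiE eqxx andbT (dimH_inv (erefl (pat x))) trPi.
rewrite /Tw mxE summxE.
under eq_bigr => P _ do rewrite chanE.
rewrite exchange_big mulr_sumr; under eq_bigr => u _ do rewrite exchange_big mulr_sumr.
under eq_bigr => u _ do under eq_bigr => v _ do rewrite -mulr_sumr mulrCA avgE.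
have Hc : forall u, \sum_v X u v * (((x == y) && (u == v) && (pat x == pat u))%:R * cfac x) =
   X u u * (((x == y) && (pat x == pat u))%:R * cfac x).
  move=> u; rewrite (bigD1 u) //= eqxx andbT big1 ?addr0 // => v /negPf Hv.
  by rewrite (eq_sym u v) Hv andbF andFb mul0r mulr0.
under eq_bigr => u _ do rewrite Hc.
rewrite big_distrl; apply: eq_bigr => u _ /=.
rewrite (eq_sym (pat u)); case: (x == y); case: (pat x == pat u); rewrite /= ?mulr0n ?mulr1n ?mulr0 ?mul0r ?mulr1 ?mul1r //.
all: exact: mulr0.
Qed.
End S.

Section S.
Variable C : numClosedFieldType.
Variable n : nat.
Variable Lam : {linear Op C n -> Op C n}.

Lemma big_tuple_cons (T : finType) m (F : m.+1.-tuple T -> Op C n) :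
  \sum_(s : m.+1.-tuple T) F s = \sum_(x : T) \sum_(t : m.-tuple T) F (cons_tuple x t).
Proof.
rewrite [RHS]pair_bigA /=.
rewrite (reindex (fun p : T * m.-tuple T => cons_tuple p.1 p.2)) //=.
exists (fun s => (thead s, behead_tuple s)) => [[x t] _|s _] /=.
  by congr pair; apply/val_inj.
by apply/val_inj; rewrite /= [in RHS](tuple_eta s).
Qed.

Lemma lin_zero (f : Op C n -> Op C n) (Hf : forall a X Y, f (a *: X + Y) = a *: f X + f Y) :
  f 0 = 0.
Proof.
have H := Hf 1 0 0; rewrite !scale1r addr0 in H.
by apply/(addrI (f 0)); rewrite addr0 -H.
Qed.

Section Lin.
Variable f : Op C n -> Op C n.
Hypothesis Hf : forall a X Y, f (a *: X + Y) = a *: f X + f Y.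

Lemma lin_add X Y : f (X + Y) = f X + f Y.
Proof. by have := Hf 1 X Y; rewrite !scale1r. Qed.

Lemma lin_scale a X : f (a *: X) = a *: f X.
Proof. by rewrite -[a *: X]addr0 Hf (lin_zero Hf) addr0. Qed.

Lemma lin_sum (I : finType) (F : I -> Op C n) : f (\sum_i F i) = \sum_i f (F i).
Proof. exact: (big_morph f lin_add (lin_zero Hf)). Qed.
End Lin.

Lemma iter_lin (f : Op C n -> Op C n) (Hf : forall a X Y, f (a *: X + Y) = a *: f X + f Y) m :
  forall a X Y, iter m f (a *: X + Y) = a *: iter m f X + iter m f Y.
Proof. by elim: m => [//|m IH] a X Y /=; rewrite IH Hf. Qed.

Definition G (X : Op C n) : Op C n := @Tw C n (Lam X).

Lemma Tw_lin a (X Y : Op C n) : Tw (a *: X + Y) = a *: Tw X + Tw Y.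
Proof.
rewrite !twirl scaler_sumr -big_split /=; apply: eq_bigr => i _.
by rewrite mulmxDr -scalemxAr mxtraceD mxtraceZ scalerDl scalerA.
Qed.

Lemma G_lin a X Y : G (a *: X + Y) = a *: G X + G Y.
Proof. by rewrite /G linearP Tw_lin. Qed.

Lemma avg m (rho : Op C n) :
  ((#|PauliN n| ^ m)%:R)^-1 *: \sum_(s : m.-tuple (PauliN n)) noisy_seq Lam s rho = iter m G rho.
Proof.
elim: m rho => [|m IH] rho.
  rewrite expn0 invr1 scale1r (big_pred1 [tuple]) //.
  by move=> s; apply/esym/eqP; exact: tuple0.
rewrite big_tuple_cons iterSr.
have -> : iter m G (G rho) = iter m G (@Tw C n (Lam rho)) by [].
rewrite /Tw (lin_scale (iter_lin G_lin m)) (lin_sum (iter_lin G_lin m)).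
rewrite scaler_sumr [RHS]scaler_sumr; apply: eq_bigr => P _.
rewrite -IH scalerA expnS natrM invfM.
by congr (_ *: _); apply: eq_bigr.
Qed.

End S.

Section S.
Variable C : numClosedFieldType.
Variable n : nat.
Variable Lam : {linear Op C n -> Op C n}.

Lemma sum_rank (F : 'I_#|Lab n| -> C) :
  \sum_(r : 'I_#|Lab n|) F r = \sum_(i : Lab n) F (enum_rank i).
Proof.
rewrite (reindex (@enum_rank (Lab n))) //.
by exists (@enum_val (Lab n) (mem {: Lab n})) => x _; rewrite ?enum_valK ?enum_rankK.
Qed.

Lemma Qpow0 i j : Qpow Lam 0 i j = (i == j)%:R.
Proof. by rewrite /Qpow /= mxE (inj_eq enum_rank_inj). Qed.

Lemma QpowS k l j : Qpow Lam k.+1 l j = \sum_i Qent Lam l i * Qpow Lam k i j.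
Proof.
rewrite /Qpow /= mxE sum_rank; apply: eq_bigr => i _.
by rewrite /Qmx mxE !enum_rankK.
Qed.

Lemma iterQ k (b : Lab n -> C) :
  iter k (G Lam) (\sum_j b j *: tPi C j) =
  \sum_i (\sum_j Qpow Lam k i j * b j) *: tPi C i.
Proof.
elim: k => [|k IH].
  rewrite /=; apply: eq_bigr => i _; congr (_ *: _).
  rewrite (bigD1 i) //= big1 ?addr0; first by rewrite Qpow0 eqxx mul1r.
  by move=> j /negPf Hj; rewrite Qpow0 eq_sym Hj mul0r.
rewrite iterS IH /G linear_sum twirl; apply: eq_bigr => l _; congr (_ *: _).
rewrite mulmx_sumr raddf_sum /=.
under eq_bigr => i _ do rewrite linearZ /= -scalemxAr mxtraceZ.
rewrite [RHS](eq_bigr (fun j => \sum_i Qent Lam l i * Qpow Lam k i j * b j)); last first.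
  by move=> j _; rewrite QpowS big_distrl.
rewrite [RHS]exchange_big /=; apply: eq_bigr => i _.
rewrite big_distrl /=; apply: eq_bigr => j _.
by rewrite mulrC mulrA.
Qed.
End S.

Unset Implicit Arguments.

Theorem theorem1 (C : numClosedFieldType) (n : nat) (Hn : (0 < n)%N)
  (Lam : {linear Op C n -> Op C n})
  (HCP : completely_positive Lam) (HTP : trace_preserving Lam)
  (rho0 Pihat : Op C n) (Hrho0 : is_state rho0) (HPihat : is_hermitian Pihat) :
  (exists rhot : Op C n, is_state rhot /\
     forall m : nat, (0 < m)%N ->
       p_LRB Lam Pihat rho0 m =
       \sum_(i : Lab n) \sum_(j : Lab n)
          \tr (tPi C i *m Pihat) * Qpow Lam (m - 1) i j * \tr (Pi C j *m rhot))
  /\ L_ave Lam = 1 - Qent Lam (cn n) (cn n)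
  /\ S_ave Lam = ((3 ^ n - 2 ^ n)%:R)^-1 *
       \sum_(i : Lab n | i != cn n) (dimH C i)%:R * Qent Lam (cn n) i.
Proof.
have Hst : is_state (Lam rho0).
  case: Hrho0 => Hpsd Htr; split; last by rewrite HTP.
  move=> v.
  have Hb : block_psd (fun (a b : 'I_1) => rho0).
    by move=> w; rewrite big_ord1 big_ord1; exact: Hpsd.
  by have := HCP 1 _ Hb (fun _ => v); rewrite big_ord1 big_ord1.
split.
  exists (Lam rho0); split => // -[//|m] _.
  rewrite /p_LRB.
  have E1 : \sum_(s : m.+1.-tuple (PauliN n)) \tr (Pihat *m noisy_seq Lam s rho0) =
            \tr (Pihat *m \sum_(s : m.+1.-tuple (PauliN n)) noisy_seq Lam s rho0).
    by rewrite mulmx_sumr raddf_sum.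
  rewrite E1 -mxtraceZ scalemxAr avg subn1 succnK iterSr /G twirl iterQ.
  rewrite mulmx_sumr raddf_sum; apply: eq_bigr => i _.
  rewrite /= -scalemxAr mxtraceZ big_distrl; apply: eq_bigr => j _ /=.
  rewrite [\tr (Pihat *m _)]mxtrace_mulC.
  by rewrite mulrC mulrA.
have h2 : (dimH C (cn n))%:R = (2 ^ n)%:R :> C.
  rewrite dimH_prod (eq_bigr (fun _ => 2%:R)); last by move=> k _; rewrite /cn ffunE.
  by rewrite prodr_const card_ord natrX.
have h2nz : (2 ^ n)%:R != 0 :> C by rewrite pnatr_eq0 expn_eq0.
split.
  rewrite /L_ave /Pil mulmxBl mul1mx raddfB /= HTP /Qent /tPi h2.
  congr (_ - _).
  rewrite /tPic mxtraceZ -[Pic C n]mulmx1 /Pic trPi.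
  under eq_bigr => u _ do rewrite mxE eqxx mulr1.
  by rewrite -dimHE h2 mulVf.
have HPi : forall i : Lab n, (dimH C i)%:R *: tPi C i = Pi C i.
  move=> i; rewrite /tPi scalerA; case: (eqVneq (dimH C i) 0%N) => [H0|Hne].
    have /eqP -> : Pi C i == 0 by rewrite -mxrank_eq0; apply/eqP.
    by rewrite scaler0.
  by rewrite divff ?scale1r // pnatr_eq0.
have Hsum : \sum_i Pi C i = 1%:M :> Op C n.
  apply/matrixP => x y; rewrite summxE (bigD1 (pat x)) //= big1 ?addr0.
    by rewrite PiE eqxx andbT mxE.
  by move=> i Hi; rewrite PiE (eq_sym (pat x) i) (negPf Hi) andbF.
have HPil : Pil C n = \sum_(i | i != cn n) (dimH C i)%:R *: tPi C i :> Op C n.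
  rewrite /Pil /Pic -Hsum (bigD1 (cn n)) //= addrC addrK.
  by apply: eq_bigr => i _; rewrite HPi.
rewrite /S_ave /tPil linearZ /= -scalemxAr mxtraceZ; congr (_ * _).
rewrite HPil linear_sum mulmx_sumr raddf_sum /=; apply: eq_bigr => i _.
by rewrite linearZ /= -scalemxAr mxtraceZ.
Qed.
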